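(* Let $q$ be a power of an odd prime, $d\geq 2$, let $A\subset\mathbb F_q$ be nonempty, let $E=A\times A\times\cdots\times A\subset\mathbb F_q^d$ ($d$ factors), and let $F\subset\mathbb F_q^d$ be nonempty. Then $$|\Delta(E,F)|\geq \min\left\{\frac{q}{2},\ \frac{|E|^{1-\frac1d}|F|}{4q^{d-1}}\right\}.$$
   Context: $\mathbb F_q$ is the finite field with $q$ elements, of characteristic greater than two. For $m=(m_1,\dots,m_d)\in\mathbb F_q^d$ put $\|m\|=m_1^2+\dots+m_d^2\in\mathbb F_q$. For $E,F\subset\mathbb F_q^d$ the distance set is $\Delta(E,F)=\{\|x-y\|\in\mathbb F_q: x\in E,\ y\in F\}$. *)

(* Defs.v *)
From HB Require Import structures.
From mathcomp Require Import all_boot all_order all_algebra all_field.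
Set Implicit Arguments. Unset Strict Implicit. Unset Printing Implicit Defensive.
Import Order.TTheory GRing.Theory Num.Theory.
Local Open Scope ring_scope.

Definition sqnorm (K : fieldType) (d : nat) (m : 'rV[K]_d) : K :=
  \sum_(i < d) (m 0 i) ^+ 2.

Definition distset (K : finFieldType) (d : nat) (E F : {set 'rV[K]_d}) : {set K} :=
  [set sqnorm (x - y) | x in E, y in F].

Definition prodset (K : finFieldType) (d : nat) (A : {set K}) : {set 'rV[K]_d} :=
  [set x : 'rV[K]_d | [forall i, x 0 i \in A]].

(* Main.v *)
Require Import Defs.
From HB Require Import structures.
From mathcomp Require Import all_boot all_order all_algebra all_field all_fingroup all_character.
From mathcomp Require Import ring lra.
Set Implicit Arguments. Unset Strict Implicit. Unset Printing Implicit Defensive.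
Import Order.TTheory GRing.Theory Num.Theory.
Local Open Scope ring_scope.

Lemma exists_char (K : finFieldType) :
  exists chi : K -> algC, [/\ (forall x y, chi (x + y) = chi x * chi y),
     (forall x, chi (- x) = (chi x)^*), chi 0 = 1 & exists t, chi t != 1].
Proof.
pose G := [set: FinRing.Field_to_finGroup K].
have abG : abelian G by apply: FinRing.zmod_abelian.
have NG : Nirr G = #|K|.
  by rewrite NirrE; move: abG; rewrite card_classes_abelian => /eqP ->; rewrite cardsT.
have n1 : (1 < Nirr G)%N by rewrite NG; exact: finRing_gt1.
pose i : Iirr G := Ordinal n1.
have linG := char_abelianP G abG.
exists (fun x => 'chi_i x); split.
- by move=> x y; rewrite -(lin_charM (linG i)) ?inE.
- by move=> x; rewrite -(lin_charV_conj (linG i)) ?inE.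
- exact: (lin_char1 (linG i)).
- have : [exists t : K, 'chi_i t != 1].
    rewrite -negb_forall; apply/negP => /forallP H.
    have e1 : 'chi_i = 'chi_0.
      rewrite irr0; apply/cfun_inP => x _; rewrite cfun1E inE.
      by apply/eqP; apply: H.
    by move/irr_inj: e1 => /(congr1 val).
  by move/existsP.
Qed.

Section Fourier.
Variable K : finFieldType.
Variable chi : K -> algC.
Hypothesis chiD : forall x y, chi (x + y) = chi x * chi y.
Hypothesis chiN : forall x, chi (- x) = (chi x)^*.
Hypothesis chi0 : chi 0 = 1.
Variable t0 : K.
Hypothesis ht0 : chi t0 != 1.

Lemma chi_sum0 (T : finType) (f : T -> K) (h : T -> T) :
  injective h -> (forall x, f (h x) = f x + t0) -> \sum_x chi (f x) = 0.
Proof.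
move=> hi hf.
have e : \sum_x chi (f x) = (\sum_x chi (f x)) * chi t0.
  rewrite {1}(reindex_inj hi) /= mulr_suml; apply: eq_bigr => x _.
  by rewrite hf chiD.
have : (\sum_x chi (f x)) * (1 - chi t0) = 0.
  by rewrite mulrBr mulr1 -e subrr.
move/eqP; rewrite mulf_eq0 subr_eq0 [1 == _]eq_sym (negbTE ht0) orbF.
by move/eqP.
Qed.

Lemma chi_sum (c : K) : \sum_u chi (c * u) = if c == 0 then #|K|%:R else 0.
Proof.
have [->|cn0] := eqVneq c 0.
  under eq_bigr do rewrite mul0r chi0.
  by rewrite sumr_const cardT.
apply: (@chi_sum0 _ (fun u => c * u) (fun u => u + t0 / c)).
  exact: addIr.
by move=> x /=; rewrite mulrDr mulrCA divff // mulr1.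
Qed.

Lemma chi_norm x : chi x * (chi x)^* = 1.
Proof. by rewrite -chiN -chiD subrr chi0. Qed.

Variable d : nat.
Local Notation V := 'rV[K]_d.

Definition dot (m v : V) : K := \sum_i m 0 i * v 0 i.

Lemma dotC m v : dot m v = dot v m.
Proof. by apply: eq_bigr => i _; rewrite mulrC. Qed.
Lemma dotDl m m' v : dot (m + m') v = dot m v + dot m' v.
Proof. by rewrite /dot -big_split; apply: eq_bigr => i _; rewrite mxE mulrDl. Qed.
Lemma dotZl c m v : dot (c *: m) v = c * dot m v.
Proof. by rewrite /dot mulr_sumr; apply: eq_bigr => i _; rewrite mxE mulrA. Qed.
Lemma dotNl m v : dot (- m) v = - dot m v.
Proof. by rewrite -scaleN1r dotZl mulN1r. Qed.
Lemma dotDr m v v' : dot m (v + v') = dot m v + dot m v'.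
Proof. by rewrite !(dotC m) dotDl. Qed.
Lemma dotZr c m v : dot m (c *: v) = c * dot m v.
Proof. by rewrite !(dotC m) dotZl. Qed.
Lemma dotNr m v : dot m (- v) = - dot m v.
Proof. by rewrite !(dotC m) dotNl. Qed.
Lemma dot0r m : dot m 0 = 0.
Proof. by rewrite /dot big1 // => i _; rewrite mxE mulr0. Qed.
Lemma dotBr m v v' : dot m (v - v') = dot m v - dot m v'.
Proof. by rewrite dotDr dotNr. Qed.
Lemma dot_delta i v : dot (delta_mx 0 i) v = v 0 i.
Proof.
rewrite /dot (bigD1 i) //= big1 ?addr0; first by rewrite mxE !eqxx mul1r.
by move=> j /negbTE ji; rewrite mxE ji andbF mul0r.
Qed.

Lemma sqnormE m : sqnorm m = dot m m.
Proof. by apply: eq_bigr => i _; rewrite expr2. Qed.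

Lemma sum_dot (v : V) :
  \sum_(m : V) chi (dot m v) = if v == 0 then (#|K| ^ d)%:R else 0.
Proof.
have [->|vn0] := eqVneq v 0.
  under eq_bigr do rewrite dot0r chi0.
  by rewrite sumr_const cardT -cardE card_mx mul1n.
have [i vi] : exists i, v 0 i != 0.
  apply/existsP; rewrite -negb_forall; apply: contra vn0 => /forallP H.
  by apply/eqP/rowP => i; rewrite mxE; apply/eqP/H.
apply: (@chi_sum0 _ (fun m => dot m v) (fun m => m + (t0 / v 0 i) *: delta_mx 0 i)).
  exact: addIr.
by move=> m /=; rewrite dotDl dotZl dot_delta mulfVK.
Qed.

Lemma sum_dot_eq (x y : V) :
  \sum_(m : V) chi (dot m x) * (chi (dot m y))^* = ((x == y) * (#|K| ^ d))%:R.
Proof.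
under eq_bigr do rewrite -chiN -chiD -dotBr.
by rewrite sum_dot subr_eq0; case: (x == y); rewrite ?mul1n ?mul0n.
Qed.

Lemma eq_detect (a b : K) :
  (a == b)%:R = #|K|%:R^-1 * \sum_(s : K) chi (s * (a - b)) :> algC.
Proof.
under eq_bigr do rewrite mulrC.
rewrite chi_sum subr_eq0; case: (a == b); last by rewrite mulr0.
by rewrite mulVf // pnatr_eq0 -lt0n; apply/card_gt0P; exists 0.
Qed.

Definition hat (S : {set V}) (m : V) : algC := \sum_(x in S) chi (dot m x).

Lemma hatM (S : {set V}) m :
  hat S m * (hat S m)^* = \sum_(x in S) \sum_(y in S) chi (dot m x) * (chi (dot m y))^*.
Proof.
rewrite /hat rmorph_sum mulr_suml; apply: eq_bigr => x _.
by rewrite mulr_sumr.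
Qed.

Lemma plancherel (S : {set V}) :
  \sum_m hat S m * (hat S m)^* = (#|S| * #|K| ^ d)%:R.
Proof.
under eq_bigr do rewrite hatM.
rewrite exchange_big /=.
under eq_bigr => x _ do rewrite exchange_big /=.
under eq_bigr => x xS.
  under eq_bigr do rewrite sum_dot_eq.
  rewrite (bigD1 x) //= big1 ?addr0; last first.
    by move=> y /andP[_ /negbTE]; rewrite eq_sym => ->; rewrite mul0n.
  rewrite eqxx mul1n.
  over.
by rewrite sumr_const natrM mulr_natl.
Qed.

Lemma sqnormD (z v : V) : sqnorm (z + v) = sqnorm z + 2 * dot z v + sqnorm v.
Proof. rewrite !sqnormE dotDl !dotDr (dotC v z); ring. Qed.

Lemma sqnormZ c (z : V) : sqnorm (c *: z) = c ^+ 2 * sqnorm z.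
Proof. by rewrite !sqnormE dotZl dotZr mulrA expr2. Qed.

Lemma chiB a b : chi a * (chi b)^* = chi (a - b).
Proof. by rewrite -chiN -chiD. Qed.

Hypothesis h2 : (2 : K) != 0.

Definition gsum (s : K) : algC := \sum_(z : V) chi (s * sqnorm z).

Lemma gauss_norm s : s != 0 -> gsum s * (gsum s)^* = (#|K| ^ d)%:R.
Proof.
move=> sn0.
rewrite /gsum rmorph_sum mulr_sumr.
under eq_bigr => z' _.
  rewrite mulr_suml (reindex_inj (addIr z')) /=.
  under eq_bigr => v _.
    rewrite chiB (_ : _ - _ = s * sqnorm v + dot z' ((2 * s) *: v)); last first.
      by rewrite sqnormD dotZr (dotC v z'); ring.
    rewrite chiD.
    over.
  over.
rewrite /= exchange_big /=.
under eq_bigr => v _ do rewrite -mulr_sumr.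
under eq_bigr => v _ do rewrite sum_dot scaler_eq0 mulf_eq0 (negbTE h2) (negbTE sn0) /=.
rewrite (bigD1 0) //= big1 ?addr0; last by move=> v /negbTE ->; rewrite mulr0.
by rewrite eqxx sqnormE dot0r mulr0 chi0 mul1r.
Qed.

Lemma qd_neq0 : (#|K| ^ d)%:R != 0 :> algC.
Proof. by rewrite pnatr_eq0 expn_eq0 negb_and; apply/orP; left; rewrite -lt0n; apply/card_gt0P; exists 0. Qed.

Lemma ctrans s m : s != 0 ->
  \sum_(z : V) chi (s * sqnorm z) * (chi (dot m z))^* =
  chi (- (4 * s)^-1 * sqnorm m) * gsum s.
Proof.
move=> sn0.
rewrite (reindex_inj (addIr ((2 * s)^-1 *: m))) /= /gsum mulr_sumr.
apply: eq_bigr => z _.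
rewrite chiB -chiD; congr chi.
rewrite sqnormD sqnormZ dotDr !dotZr (dotC m z) !sqnormE.
have h4 : (4 : K) = 2 * 2 by rewrite -natrM.
rewrite h4; field.
by rewrite sn0 h4 mulf_neq0 // h2.
Qed.

Lemma inversion s w : s != 0 ->
  chi (s * sqnorm w) = (#|K| ^ d)%:R^-1 * gsum s *
     \sum_(m : V) chi (- (4 * s)^-1 * sqnorm m) * chi (dot m w).
Proof.
move=> sn0.
have e : \sum_(m : V) (\sum_(z : V) chi (s * sqnorm z) * (chi (dot m z))^*) * chi (dot m w)
   = (#|K| ^ d)%:R * chi (s * sqnorm w).
  under eq_bigr do rewrite mulr_suml.
  rewrite exchange_big /=.
  under eq_bigr => z _.
    under eq_bigr do rewrite -mulrA (mulrC (_^*)).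
    rewrite -mulr_sumr sum_dot_eq.
    over.
  rewrite (bigD1 w) //= big1 ?addr0; last first.
    by move=> z /negbTE; rewrite eq_sym => ->; rewrite mul0n mulr0.
  by rewrite eqxx mul1n mulrC.
rewrite -mulrA [gsum s * _]mulr_sumr.
under eq_bigr => m _ do rewrite mulrA (mulrC (gsum s)) -ctrans //.
by rewrite e mulrA mulVf ?mul1r // qd_neq0.
Qed.

Lemma hatM2 (S T : {set V}) m :
  hat S m * (hat T m)^* = \sum_(x in S) \sum_(y in T) chi (dot m (x - y)).
Proof.
rewrite /hat rmorph_sum mulr_suml; apply: eq_bigr => x _.
by rewrite mulr_sumr; apply: eq_bigr => y _; rewrite chiB dotBr.
Qed.

Variables E F : {set V}.

Definition W s := \sum_(x in E) \sum_(y in F) chi (s * sqnorm (x - y)).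
Definition Phi m := hat E m * (hat F m)^*.
Definition H r := \sum_(m : V) chi (r * sqnorm m) * Phi m.
Definition rr (s : K) := - (4 * s)^-1.

Lemma W_eq s : s != 0 -> W s = (#|K| ^ d)%:R^-1 * gsum s * H (rr s).
Proof.
move=> sn0; rewrite /W.
under eq_bigr => x _ do under eq_bigr => y _ do rewrite inversion //.
set c := _ * gsum s.
rewrite /H [c * _]mulr_sumr.
under [RHS]eq_bigr => m _.
  rewrite /Phi hatM2 mulrA mulr_sumr.
  under eq_bigr => x _ do rewrite mulr_sumr.
  over.
rewrite [RHS]exchange_big /=; apply: eq_bigr => x _.
rewrite [RHS]exchange_big /=; apply: eq_bigr => y _.
rewrite mulr_sumr; apply: eq_bigr => m _.
by rewrite mulrA.
Qed.

Lemma WW s : s != 0 ->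
  W s * (W s)^* = (#|K| ^ d)%:R^-1 * (H (rr s) * (H (rr s))^*).
Proof.
move=> sn0; rewrite W_eq // !rmorphM /= fmorphV rmorph_nat.
set c := (#|K| ^ d)%:R^-1.
set h := H (rr s).
transitivity (c * c * (gsum s * (gsum s)^*) * (h * h^*)); first ring.
rewrite gauss_norm // /c; field.
exact: qd_neq0.
Qed.

Lemma rr_inj : injective rr.
Proof.
move=> a b; rewrite /rr => /oppr_inj /invr_inj.
have h4 : (4 : K) != 0.
  by rewrite (_ : (4 : K) = 2 * 2) ?mulf_neq0 // -natrM.
exact: mulfI.
Qed.

Lemma sumWW :
  \sum_(s | s != 0) W s * (W s)^* <=
  (#|K| ^ d)%:R^-1 * \sum_r H r * (H r)^*.
Proof.
under eq_bigr => s sn0 do rewrite WW //.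
rewrite -mulr_sumr ler_wpM2l ?invr_ge0 ?ler0n //.
rewrite [X in _ <= X](reindex_inj rr_inj) /=.
rewrite [X in _ <= X](bigD1 0) //= lerDr.
by rewrite mul_conjC_ge0.
Qed.

Definition Tsum := \sum_(m : V) \sum_(m' : V)
  (sqnorm m == sqnorm m')%:R * (Phi m * (Phi m')^*).

Lemma sumHH : \sum_r H r * (H r)^* = #|K|%:R * Tsum.
Proof.
have e r : H r * (H r)^* = \sum_(m : V) \sum_(m' : V)
    chi (r * sqnorm m) * (chi (r * sqnorm m'))^* * (Phi m * (Phi m')^*).
  rewrite /H rmorph_sum mulr_suml; apply: eq_bigr => m _.
  rewrite mulr_sumr; apply: eq_bigr => m' _.
  by rewrite rmorphM /=; ring.
under eq_bigr do rewrite e.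
rewrite exchange_big /= /Tsum mulr_sumr; apply: eq_bigr => m _.
rewrite exchange_big /= mulr_sumr; apply: eq_bigr => m' _.
rewrite -mulr_suml [RHS]mulrA; congr (_ * _).
under eq_bigr do rewrite chiB -mulrBr mulrC.
rewrite chi_sum subr_eq0.
by case: (_ == _); rewrite ?mulr1 ?mulr0.
Qed.

Lemma amgm (x y : algC) : 0 <= x -> 0 <= y -> x * y *+ 2 <= x ^+ 2 + y ^+ 2.
Proof.
move=> x0 y0.
have r : (x - y) \is Num.real by rewrite rpredB // ger0_real.
have := mul_conjC_ge0 (x - y); rewrite conj_Creal // => h.
rewrite -subr_ge0 (_ : x ^+ 2 + y ^+ 2 - x * y *+ 2 = (x - y) * (x - y)) //.
rewrite mulr2n; ring.
Qed.

Lemma q_gt0 : (0 < #|K|)%N.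
Proof. by apply/card_gt0P; exists 0. Qed.

Lemma Tsum_ge0 : 0 <= Tsum.
Proof.
have h : 0 <= #|K|%:R * Tsum.
  by rewrite -sumHH sumr_ge0 // => r _; exact: mul_conjC_ge0.
by rewrite pmulr_rge0 ?ltr0n ?q_gt0 in h.
Qed.

Lemma T_bound M :
  (forall k, \sum_(m : V | sqnorm m == k) `|hat E m| ^+ 2 <= M) ->
  Tsum <= M * (#|F| * #|K| ^ d)%:R.
Proof.
move=> HM.
rewrite -(ger0_norm Tsum_ge0).
pose a m : algC := `|hat E m|; pose b m : algC := `|hat F m|.
pose c (m m' : V) : algC := (sqnorm m == sqnorm m')%:R.
pose X (m m' : V) := a m ^+ 2 * b m' ^+ 2.
apply: (le_trans (ler_norm_sum _ _ _)).
apply: (@le_trans _ _ (\sum_m \sum_m' c m m' * ((X m m' + X m' m) / 2))).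
  apply: ler_sum => m _; apply: (le_trans (ler_norm_sum _ _ _)).
  apply: ler_sum => m' _.
  rewrite normrM normr_nat /Phi !normrM !norm_conjC !normrM !norm_conjC.
  apply: ler_wpM2l; first exact: ler0n.
  rewrite ler_pdivlMr ?ltr0n // mulr_natr /X -!exprMn.
  rewrite (_ : `|hat E m| * `|hat F m| * (`|hat E m'| * `|hat F m'|) =
    (a m * b m') * (a m' * b m)); last by rewrite /a /b; ring.
  by apply: amgm; apply: mulr_ge0; apply: normr_ge0.
have sym : \sum_m \sum_m' c m m' * X m' m = \sum_m \sum_m' c m m' * X m m'.
  rewrite exchange_big /=; apply: eq_bigr => m _; apply: eq_bigr => m' _.
  by rewrite /c eq_sym.
have -> : \sum_m \sum_m' c m m' * ((X m m' + X m' m) / 2) =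
          \sum_m \sum_m' c m m' * X m m'.
  transitivity ((\sum_m \sum_m' c m m' * X m m' + \sum_m \sum_m' c m m' * X m' m) / 2).
    rewrite mulrDl !mulr_suml -big_split; apply: eq_bigr => m _ /=.
    rewrite !mulr_suml -big_split; apply: eq_bigr => m' _ /=.
    by rewrite mulrDl mulrDr !mulrA.
  by rewrite [X in _ + X]sym -mulr2n -[_ *+ 2]mulr_natr mulfK // pnatr_eq0.
rewrite exchange_big /=.
apply: (@le_trans _ _ (\sum_m' b m' ^+ 2 * M)).
  apply: ler_sum => m' _.
  rewrite /X.
  under eq_bigr do rewrite (mulrC (a _ ^+ 2)) mulrA (mulrC (c _ _)) -mulrA.
  rewrite -mulr_sumr ler_wpM2l ?exprn_ge0 ?normr_ge0 //.
  apply: le_trans (HM (sqnorm m')).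
  rewrite [X in _ <= X]big_mkcond /=; apply: ler_sum => m _.
  by rewrite /c; case: (_ == _); rewrite ?mul1r ?mul0r.
rewrite -mulr_suml mulrC; apply: ler_wpM2l.
  apply: le_trans (HM 0); apply: sumr_ge0 => m _; exact: exprn_ge0.
rewrite -plancherel le_eqVlt; apply/orP; left; apply/eqP.
by apply: eq_bigr => m _; rewrite /b normCK.
Qed.

Section Sphere.
Variable i0 : 'I_d.
Local Notation e0 := (delta_mx 0 i0 : V).

Definition E0 (A : {set K}) : {set V} :=
  [set x : V | (x 0 i0 == 0) && [forall i, (i != i0) ==> (x 0 i \in A)]].
Definition gmap (p : V * K) : V := p.1 + p.2 *: e0.

Lemma coord_g (x : V) t i : (x + t *: e0) 0 i = x 0 i + (if i == i0 then t else 0).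
Proof. by rewrite !mxE eqxx /=; case: (i == i0); rewrite ?mulr1 ?mulr0. Qed.

Lemma prodset_img A : prodset d A = gmap @: setX (E0 A) A.
Proof.
apply/setP => x; apply/idP/imsetP.
- rewrite inE => /forallP hx.
  exists (x + (- x 0 i0) *: e0, x 0 i0); last first.
    by rewrite /gmap /= -addrA -scalerDl addNr scale0r addr0.
  rewrite inE /= !inE coord_g eqxx addrN eqxx /= hx andbT.
  apply/forallP => i; apply/implyP => /negbTE ii0.
  by rewrite coord_g ii0 addr0.
- move=> [[x0 t]] /setXP [hx0 ht] ->.
  rewrite inE; apply/forallP => i; rewrite /gmap /= coord_g.
  move: hx0; rewrite inE => /andP [/eqP h0 /forallP hA].
  have [->|ii0] := eqVneq i i0; first by rewrite h0 add0r.
  by rewrite addr0; move/implyP: (hA i); apply.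
Qed.

Lemma gmap_inj A : {in setX (E0 A) A &, injective gmap}.
Proof.
move=> [x t] [x' t'] /setXP [hx _] /setXP [hx' _] /= e.
move: hx hx'; rewrite !inE => /andP [/eqP h0 _] /andP [/eqP h0' _].
have et : t = t'.
  have := congr1 (fun v : V => v 0 i0) e; rewrite /gmap /= !coord_g eqxx h0 h0'.
  by rewrite !add0r.
move: e; rewrite /gmap /= et => /addIr ->.
by [].
Qed.

Lemma card_prodset A : #|prodset d A| = (#|E0 A| * #|A|)%N.
Proof. by rewrite prodset_img card_in_imset ?cardsX //; exact: gmap_inj. Qed.

Lemma sum_prodset A (f : V -> algC) :
  \sum_(x in prodset d A) f x = \sum_(x0 in E0 A) \sum_(t in A) f (x0 + t *: e0).
Proof.
rewrite prodset_img big_imset /=; last exact: gmap_inj.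
rewrite pair_big_dep; apply: eq_bigl => -[x t] /=; by rewrite in_setX.
Qed.

Lemma hat_prod A m :
  hat (prodset d A) m = hat (E0 A) m * \sum_(t in A) chi (m 0 i0 * t).
Proof.
rewrite /hat sum_prodset mulr_suml; apply: eq_bigr => x0 _.
rewrite mulr_sumr; apply: eq_bigr => t _.
by rewrite dotDr dotZr (dotC m e0) dot_delta chiD (mulrC t).
Qed.

Lemma hatE0_shift A m c : hat (E0 A) (m + c *: e0) = hat (E0 A) m.
Proof.
apply: eq_bigr => x; rewrite inE => /andP [/eqP h0 _].
by rewrite dotDl dotZl dot_delta h0 mulr0 addr0.
Qed.

Lemma fiber2 (m : V) k : (#|[set c : K | sqnorm (m + c *: e0) == k]| <= 2)%N.
Proof.
have sq c : sqnorm (m + c *: e0) = sqnorm m + c * (2 * m 0 i0) + c ^+ 2.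
  rewrite sqnormD sqnormZ dotZr (dotC m e0) dot_delta (sqnormE e0) dot_delta mxE !eqxx /=.
  ring.
set S := [set c | _].
case: (set_0Vmem S) => [->|[c0]].
  by rewrite cards0.
rewrite inE => /eqP h0.
apply: (@leq_trans #|[set c0; - c0 - 2 * m 0 i0]|); last first.
  by rewrite cards2; case: (_ != _).
apply: subset_leq_card; apply/subsetP => c; rewrite !inE => /eqP hc.
have : (c - c0) * (c + c0 + 2 * m 0 i0) = 0.
  have : sqnorm (m + c *: e0) - sqnorm (m + c0 *: e0) = 0 by rewrite hc h0 subrr.
  by rewrite !sq => <-; ring.
move/eqP; rewrite mulf_eq0 subr_eq0 => /orP [-> //|h]; apply/orP; right.
by rewrite -subr_eq0 -(eqP h); apply/eqP; ring.
Qed.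

Lemma sphere_avg (G : V -> algC) k :
  (forall m, 0 <= G m) -> (forall m c, G (m + c *: e0) = G m) ->
  #|K|%:R * \sum_(m | sqnorm m == k) G m <= 2%:R * \sum_m G m.
Proof.
move=> G0 Gs.
have e c : \sum_(m | sqnorm m == k) G m =
           \sum_m G m * (sqnorm (m + c *: e0) == k)%:R.
  rewrite big_mkcond (reindex_inj (addIr (c *: e0))) /=; apply: eq_bigr => m _.
  by rewrite Gs; case: (_ == _); rewrite ?mulr1 ?mulr0.
have h1 : #|K|%:R * (\sum_(m | sqnorm m == k) G m) =
    \sum_(c : K) \sum_(m | sqnorm m == k) G m.
  by rewrite sumr_const mulr_natl.
rewrite h1.
rewrite (eq_bigr _ (fun c _ => e c)).
rewrite exchange_big /= mulr_sumr; apply: ler_sum => m _.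
rewrite -mulr_sumr mulrC; apply: ler_wpM2r; first exact: G0.
have -> : \sum_(c : K) ((sqnorm (m + c *: e0) == k)%:R : algC) =
    (#|[set c : K | sqnorm (m + c *: e0) == k]|)%:R.
  rewrite -natr_sum cardsE -sum1_card [in RHS]big_mkcond /=.
  by congr (_%:R); apply: eq_bigr => c _; rewrite unfold_in; case: (_ == _).
by rewrite ler_nat; exact: fiber2.
Qed.

Lemma normchi x : `|chi x| = 1.
Proof.
apply/eqP; rewrite -sqrp_eq1 ?normr_ge0 // normCK chi_norm //.
Qed.

Lemma hatA_le (A : {set K}) c : `|\sum_(t in A) chi (c * t)| <= #|A|%:R.
Proof.
apply: le_trans (ler_norm_sum _ _ _) _.
under eq_bigr do rewrite normchi.
by rewrite sumr_const.
Qed.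

Lemma sphere_bound (A : {set K}) k :
  \sum_(m | sqnorm m == k) `|hat (prodset d A) m| ^+ 2 <=
  2%:R * (#|A| ^ 2 * #|E0 A| * #|K| ^ d)%:R / #|K|%:R.
Proof.
have qp : 0 < (#|K|%:R : algC) by rewrite ltr0n q_gt0.
rewrite ler_pdivlMr // mulrC.
apply: (@le_trans _ _ (#|K|%:R * \sum_(m | sqnorm m == k) `|hat (E0 A) m| ^+ 2 * #|A|%:R ^+ 2)).
  rewrite ler_wpM2l ?ler0n //; apply: ler_sum => m _.
  rewrite hat_prod normrM exprMn ler_wpM2l ?exprn_ge0 ?normr_ge0 //.
  by rewrite lerXn2r ?nnegrE ?normr_ge0 ?ler0n ?hatA_le.
rewrite -mulr_suml mulrA.
apply: (@le_trans _ _ (2%:R * (\sum_m `|hat (E0 A) m| ^+ 2) * #|A|%:R ^+ 2)).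
  apply: ler_wpM2r; first exact: exprn_ge0.
  apply: sphere_avg => [m|m c]; first exact: exprn_ge0.
  by rewrite hatE0_shift.
under eq_bigr do rewrite normCK.
rewrite plancherel -mulrA; apply: ler_wpM2l; first exact: ler0n.
by rewrite -natrX -natrM mulnC mulnA.
Qed.

End Sphere.

Definition fpair (p : V * V) : K := sqnorm (p.1 - p.2).
Definition Nnat : nat :=
  \sum_(p in setX E F) \sum_(p' in setX E F) (fpair p == fpair p').

Lemma W_pair s : W s = \sum_(p in setX E F) chi (s * fpair p).
Proof.
by rewrite /W pair_big_dep; apply: eq_bigl => -[x y] /=; rewrite in_setX.
Qed.

Lemma qN : #|K|%:R * (Nnat%:R) = \sum_s W s * (W s)^*.
Proof.
under eq_bigr => s _.
  rewrite W_pair rmorph_sum mulr_suml.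
  under eq_bigr => p _ do rewrite mulr_sumr.
  over.
rewrite /= exchange_big /= /Nnat natr_sum mulr_sumr; apply: eq_bigr => p _.
rewrite exchange_big /= natr_sum mulr_sumr; apply: eq_bigr => p' _.
rewrite eq_detect mulrA mulfV ?mul1r; last by rewrite pnatr_eq0 -lt0n q_gt0.
apply: eq_bigr => s _.
by rewrite chiB mulrBr.
Qed.

Lemma W0 : W 0 = (#|E| * #|F|)%:R.
Proof.
rewrite W_pair; under eq_bigr do rewrite mul0r chi0.
by rewrite sumr_const cardsX.
Qed.

Lemma main_fourier M :
  (forall k, \sum_(m : V | sqnorm m == k) `|hat E m| ^+ 2 <= M) ->
  #|K|%:R * (Nnat%:R) <= (#|E| * #|F|)%:R ^+ 2 + #|K|%:R * M * #|F|%:R.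
Proof.
move=> HM.
rewrite qN (bigD1 0) //= W0 rmorph_nat -expr2 lerD2l.
apply: (le_trans sumWW).
rewrite sumHH.
have hT := T_bound HM.
have qp : 0 < (#|K|%:R : algC) by rewrite ltr0n q_gt0.
have qdp : 0 < ((#|K| ^ d)%:R : algC) by rewrite ltr0n expn_gt0 q_gt0.
rewrite ler_pdivrMl //.
rewrite (_ : _ * (_ * M * _) = #|K|%:R * (M * (#|F| * #|K| ^ d)%:R)); last first.
  by rewrite natrM; ring.
by rewrite ler_wpM2l ?ler0n.
Qed.

Lemma real_cs (T : finType) (S : {set T}) (g : T -> algC) :
  (forall t, g t \is Num.real) ->
  (\sum_(t in S) g t) ^+ 2 <= #|S|%:R * \sum_(t in S) g t ^+ 2.
Proof.
move=> gr.
have h : 0 <= \sum_(t in S) \sum_(u in S) (g t - g u) * (g t - g u).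
  apply: sumr_ge0 => t _; apply: sumr_ge0 => u _.
  have := mul_conjC_ge0 (g t - g u); rewrite conj_Creal //.
  by rewrite rpredB.
have e : \sum_(t in S) \sum_(u in S) (g t - g u) * (g t - g u) =
   (#|S|%:R * \sum_(t in S) g t ^+ 2 - (\sum_(t in S) g t) ^+ 2) *+ 2.
  transitivity (\sum_(t in S) \sum_(u in S) (g t ^+ 2 + g u ^+ 2 - (g t * g u) *+ 2)).
    by apply: eq_bigr => t _; apply: eq_bigr => u _; rewrite mulr2n; ring.
  set G1 := \sum_(t in S) g t; set G2 := \sum_(t in S) g t ^+ 2.
  have inner t : \sum_(u in S) (g t ^+ 2 + g u ^+ 2 - (g t * g u) *+ 2) =
      g t ^+ 2 *+ #|S| + G2 - (g t * G1) *+ 2.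
    by rewrite sumrB big_split /= sumr_const sumrMnl -mulr_sumr.
  under eq_bigr do rewrite inner.
  rewrite sumrB big_split /= sumr_const.
  rewrite !sumrMnl -mulr_suml -/G1 -/G2 -[G2 *+ _]mulr_natl !mulr2n; clearbody G1 G2; ring.
have : 0 <= (#|S|%:R * \sum_(t in S) g t ^+ 2 - (\sum_(t in S) g t) ^+ 2) *+ 2.
  by rewrite -e.
by rewrite pmulrn_lge0 // subr_ge0.
Qed.

Definition nu (t : K) : nat := \sum_(p in setX E F) (fpair p == t).

Lemma fpair_in p : p \in setX E F -> fpair p \in distset E F.
Proof.
case: p => x y; rewrite in_setX => /andP [hx hy].
by rewrite /distset /fpair /=; apply: imset2_f.
Qed.

Lemma sum_nu : (\sum_(t in distset E F) nu t = #|E| * #|F|)%N.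
Proof.
rewrite /nu exchange_big /= -cardsX -sum1_card; apply: eq_bigr => p hp.
rewrite (bigD1 (fpair p)) ?fpair_in //= eqxx big1 ?addn0 //.
by move=> t /andP [_ ne]; rewrite eq_sym (negbTE ne).
Qed.

Lemma sum_nu2 : (\sum_(t in distset E F) nu t ^ 2 = Nnat)%N.
Proof.
under eq_bigr do rewrite /nu expnS expn1 big_distrlr /=.
rewrite exchange_big /= /Nnat; apply: eq_bigr => p hp.
rewrite exchange_big /=; apply: eq_bigr => p' hp'.
rewrite (bigD1 (fpair p)) ?fpair_in //= eqxx big1 ?addn0.
  by rewrite mul1n eq_sym.
by move=> t /andP [_ ne]; rewrite eq_sym (negbTE ne).
Qed.

Lemma cs_bound : ((#|E| * #|F|)%:R : algC) ^+ 2 <= #|distset E F|%:R * Nnat%:R.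
Proof.
have h := @real_cs _ (distset E F) (fun t => (nu t)%:R) (fun t => @realn _ (nu t)).
rewrite -natr_sum sum_nu in h; apply: (le_trans h).
by rewrite -sum_nu2 natr_sum; under eq_bigr do rewrite natrX.
Qed.

End Fourier.
From mathcomp Require Import zify.
Lemma case1 (q X Y D N : nat) : (0 < X)%N -> (X ^ 2 <= D * N)%N -> (q * N <= X ^ 2 + Y * X)%N -> (Y <= X)%N -> (q <= 2 * D)%N.
Proof.
move=> X0 hC hF hXY.
have h1 : (q * X ^ 2 <= (2 * D) * X ^ 2)%N.
  apply: (@leq_trans (D * (q * N))).
    by rewrite mulnCA leq_mul2l hC orbT.
  apply: (@leq_trans (D * (X ^ 2 + Y * X))); first by rewrite leq_mul2l hF orbT.
  nia.
by rewrite leq_pmul2r ?expn_gt0 ?X0 in h1.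
Qed.
Lemma case2 (q X Y D N : nat) : (0 < X)%N -> (X ^ 2 <= D * N)%N -> (q * N <= X ^ 2 + Y * X)%N -> (X < Y)%N -> (q * X <= 2 * D * Y)%N.
Proof.
move=> X0 hC hF hXY.
have h1 : (q * X * X <= (2 * D * Y) * X)%N.
  apply: (@leq_trans (D * (q * N))).
    rewrite -mulnA (_ : (X * X = X ^ 2)%N); last by rewrite expnS expn1.
    by rewrite mulnCA leq_mul2l hC orbT.
  apply: (@leq_trans (D * (X ^ 2 + Y * X))); first by rewrite leq_mul2l hF orbT.
  nia.
by rewrite leq_pmul2r ?X0 in h1.
Qed.

Lemma card_prodset_pow (K : finFieldType) d (A : {set K}) :
  #|prodset d A| = (#|A| ^ d)%N.
Proof.
have -> : prodset d A = [set \row_i f i | f : {ffun 'I_d -> K} in ffun_on A].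
  apply/setP => x; apply/idP/imsetP.
  - rewrite inE => /forallP h; exists [ffun i => x 0 i].
      by apply/ffun_onP => i; rewrite ffunE.
    by apply/rowP => i; rewrite !mxE ffunE.
  - move=> [g /ffun_onP hg ->]; rewrite inE; apply/forallP => i.
    by rewrite mxE.
rewrite card_imset ?card_ffun_on ?card_ord //.
move=> g g' e; apply/ffunP => i.
by have := congr1 (fun v : 'rV_d => v 0 i) e; rewrite !mxE.
Qed.

Theorem mainTheorem4 (K : finFieldType) (hK : (2 \notin [pchar K])%N)
  (d : nat) (hd : (2 <= d)%N) (A : {set K}) (hA : A != set0)
  (F : {set 'rV[K]_d}) (hF : F != set0) :
  let q := #|K| in
  let E := prodset d A in
  Num.min ((q%:R : algC) / 2)
    ((d.-root (#|E|%:R : algC)) ^+ (d.-1) * #|F|%:R / (4 * q%:R ^+ (d.-1)))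
  <= #|distset E F|%:R.
Proof.
cbv zeta; set q := #|K|; set E := prodset d A.
have [chi [chiD chiN chi0 [t0 ht0]]] := exists_char K.
have h2 : (2 : K) != 0.
  by apply: contra hK => h; rewrite inE /= h.
have d0 : (0 < d)%N by apply: leq_trans hd.
pose i0 : 'I_d := Ordinal d0.
have HF := main_fourier chiD chiN chi0 ht0 h2 F (sphere_bound chiD chiN chi0 ht0 i0 A).
have HC := cs_bound E F.
rewrite -/E -/q in HF.
set n := #|A| in HF *; set f := #|F| in HF HC *; set D := #|distset E F| in HC *.
set N := Nnat E F in HF HC; set e := #|E| in HF HC *.
have cE : e = (n ^ d)%N by rewrite /e card_prodset_pow.
have cE0 : e = (#|E0 i0 A| * n)%N by rewrite /e /E (card_prodset i0 A).
have qp : (0 < q)%N by apply/card_gt0P; exists 0.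
have np : (0 < n)%N by rewrite card_gt0.
have fp : (0 < f)%N by rewrite card_gt0.
have X0 : (0 < e * f)%N by rewrite muln_gt0 fp cE expn_gt0 np.
have eq1 : (((2 * n * q ^ d) * (e * f))%:R : algC) =
    q%:R * (2 * (n ^ 2 * #|E0 i0 A| * q ^ d)%:R / q%:R) * f%:R.
  rewrite cE0 !natrM !natrX; field.
  by rewrite pnatr_eq0 -lt0n qp.
rewrite -eq1 -natrX -natrD -natrM ler_nat in HF.
rewrite -natrX -natrM ler_nat in HC.
rewrite cE natrX exprCK ?ler0n //.
have dk : d = (d.-1).+1 by rewrite prednK.
rewrite comparable_ge_min; last by apply: real_comparable; apply: ger0_real; repeat (apply: divr_ge0 || apply: mulr_ge0 || apply: exprn_ge0 || apply: ler0n).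
have [hle|hlt] := leqP (2 * n * q ^ d) (e * f).
  apply/orP; left.
  have h := case1 X0 HC HF hle.
  by rewrite ler_pdivrMr ?ltr0n // -natrM ler_nat mulnC.
apply/orP; right.
have h := case2 X0 HC HF hlt.
set k := d.-1 in dk *.
have hk : (n ^ k * f <= D * (4 * q ^ k))%N.
  rewrite -(@leq_pmul2l (q * n)) ?muln_gt0 ?qp ?np //.
  rewrite cE dk !expnS in h.
  set a := (n ^ k)%N in h *; set b := (q ^ k)%N in h *.
  nia.
rewrite ler_pdivrMr; last by rewrite mulr_gt0 ?ltr0n ?exprn_gt0 ?ltr0n.
by rewrite -!natrX -!natrM ler_nat.
Qed.
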